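(* Let $\mathcal P=(S_1,\dots,S_n)$ be a partition of $V(G)$ into sets of size $r$ such that every $S_i$ is an independent set of $G$ (no edge of $G$ has both endpoints in the same $S_i$), and let $T=T_{\vec B,\mathcal P}$. Then $\mathbb E_{\vec B}(\xi)=0$, and hence $\mathbb E_{\vec B}(\hat t_{\mathrm{Neyman}})=\bar t$.
   Context: Let $n,p,q$ be positive integers, $r=p+q$, $G$ a finite simple graph with $|V(G)|=rn$ and no isolated vertices; $\mathcal N(v)$ neighbor set. For each $v$, $x_v,t_v\in\mathbb R$ and $f_v:2^{\mathcal N(v)}\to\mathbb R$ with $f_v(\emptyset)=0$; outcomes $y_v=x_v+\mathbf 1_T(v)t_v+f_v(T\cap\mathcal N(v))$; $\bar t=\frac1{rn}\sum_vt_v$. $\sigma_T(v)=q$ if $v\in T$, $-p$ otherwise; for $|T|=pn$, $\hat t_{\mathrm{Neyman}}=\frac1{pqn}\sum_v\sigma_T(v)y_v$ and $\xi=\frac1{pqn}\sum_v\sigma_T(v)f_v(T\cap\mathcal N(v))$. Restricted randomization: $S_i=\{w_i^1,\dots,w_i^r\}$, $B_1,\dots,B_n$ i.i.d. uniform $p$-subsets of $\{1,\dots,r\}$, $T_{\vec B,\mathcal P}=\{w_i^j:j\in B_i\}$. *)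

(* Defs.v *)
From HB Require Import structures.
From mathcomp Require Import all_boot all_order all_algebra.
Set Implicit Arguments. Unset Strict Implicit. Unset Printing Implicit Defensive.
Import Order.TTheory GRing.Theory Num.Theory.
Local Open Scope ring_scope.

Definition nbhd (V : finType) (e : rel V) (v : V) : {set V} := [set u | e v u].

Definition Bchoices (n r p : nat) : {set {ffun 'I_n -> {set 'I_r}}} :=
  [set B : {ffun 'I_n -> {set 'I_r}} | [forall i, #|B i| == p]].

(* T_{B,P} = { w_i^j : j in B_i }, with the partition given by w (S_i = w(i,_)). *)
Definition treatT (V : finType) (n r : nat) (w : 'I_n * 'I_r -> V)
  (B : {ffun 'I_n -> {set 'I_r}}) : {set V} :=
  [set v | [exists i : 'I_n, exists j : 'I_r, (j \in B i) && (w (i, j) == v)]].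

(* Expectation over B_1,...,B_n i.i.d. uniform p-subsets of {1..r}
   (= uniform over the product set Bchoices). *)
Definition EB (R : realFieldType) (n r p : nat)
  (X : {ffun 'I_n -> {set 'I_r}} -> R) : R :=
  (\sum_(B in Bchoices n r p) X B) / (#|Bchoices n r p|)%:R.

Definition sigmaT (R : realFieldType) (V : finType) (p q : nat) (T : {set V}) (v : V) : R :=
  if v \in T then q%:R else - (p%:R).

Definition outcome (R : realFieldType) (V : finType) (e : rel V)
  (x t : V -> R) (f : V -> {set V} -> R) (T : {set V}) (v : V) : R :=
  x v + (if v \in T then t v else 0) + f v (T :&: nbhd e v).

Definition tNeyman (R : realFieldType) (V : finType) (e : rel V) (n p q : nat)
  (x t : V -> R) (f : V -> {set V} -> R) (T : {set V}) : R :=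
  (p * q * n)%:R^-1 * \sum_v sigmaT R p q T v * outcome e x t f T v.

Definition xiT (R : realFieldType) (V : finType) (e : rel V) (n p q : nat)
  (f : V -> {set V} -> R) (T : {set V}) : R :=
  (p * q * n)%:R^-1 * \sum_v sigmaT R p q T v * f v (T :&: nbhd e v).

Definition tbar (R : realFieldType) (V : finType) (n r : nat) (t : V -> R) : R :=
  (r * n)%:R^-1 * \sum_v t v.

Arguments EB {R} n r p X.
Arguments xiT {R V} e n p q f T.
Arguments tNeyman {R V} e n p q x t f T.
Arguments tbar {R V} n r t.
Arguments treatT {V} n r w B.

(* Main.v *)
Require Import Defs.
From HB Require Import structures.
From mathcomp Require Import all_boot all_order all_algebra all_fingroup.
From mathcomp Require Import ring.
Import Order.TTheory GRing.Theory Num.Theory.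
Local Open Scope ring_scope.

Section Key.
Variables (R : realFieldType) (n p q : nat) (hq : (0 < q)%N).
Local Notation r := (p + q)%N.

Definition sg (b : bool) : R := if b then q%:R else - p%:R.

Lemma sum_sg (X : {set 'I_r}) : #|X| = p -> \sum_(j : 'I_r) sg (j \in X) = 0.
Proof.
move=> hX.
rewrite (bigID (fun j => j \in X)) /=.
rewrite (eq_bigr (fun _ => q%:R)); last by move=> j ->.
rewrite [X in _ + X](eq_bigr (fun _ => - p%:R)); last by move=> j /negbTE ->.
rewrite !sumr_const.
have hc := cardC X; rewrite card_ord hX in hc.
have hq' : #|[predC X]| = q by apply/eqP; rewrite -(eqn_add2l p) hc.
rewrite hX.
have -> : #|(fun i : 'I_r => i \notin X)| = #|[predC X]| by [].
rewrite hq' -mulrnA mulNrn -mulrnA mulnC subrr //.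
Qed.

Lemma key (i : 'I_n) (j : 'I_r) (g : {ffun 'I_n -> {set 'I_r}} -> R)
  (hg : forall B B' : {ffun 'I_n -> {set 'I_r}}, (forall k, k != i -> B k = B' k) -> g B = g B') :
  \sum_(B in Bchoices n r p) sg (j \in B i) * g B = 0.
Proof.
set S := fun j => \sum_(B in Bchoices n r p) sg (j \in B i) * g B.
have Sj : forall j', S j' = S j.
  move=> j'.
  pose phi := fun B : {ffun 'I_n -> {set 'I_r}} =>
    [ffun k => if k == i then tperm j j' @: B k else B k].
  have phiK : involutive phi.
    move=> B; apply/ffunP => k; rewrite !ffunE.
    case: (k == i) => //; apply/setP => x.
    by rewrite -{1}(tpermK j j' x) !mem_imset //; exact: perm_inj.
  rewrite /S (reindex_inj (can_inj phiK)) /=.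
  apply: eq_big => B.
    rewrite !inE; apply: eq_forallb => k; rewrite ffunE.
    by case: ifP => // _; rewrite card_imset //; exact: perm_inj.
  move=> _; rewrite ffunE eqxx.
  congr (_ * _).
    congr sg.
    rewrite -{1}(tpermL j j') mem_imset //; exact: perm_inj.
  apply: hg => k hk; rewrite ffunE (negbTE hk) //.
have : (r%:R : R) * S j = 0.
  rewrite mulr_natl -[X in _ *+ X](card_ord r) -sumr_const.
  rewrite (eq_bigr (fun j' => S j')); last by move=> j' _; rewrite Sj.
  rewrite /S exchange_big /=.
  rewrite big1 // => B; rewrite inE => /forallP /(_ i) /eqP hB.
  by rewrite -mulr_suml sum_sg // mul0r.
move/eqP; rewrite mulf_eq0 pnatr_eq0 addn_eq0 [q == 0]eqn0Ngt hq andbF.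
by move/eqP.
Qed.
End Key.

Theorem mainTheorem11 (R : realFieldType) (n p q : nat) (V : finType) (e : rel V)
  (hn : (0 < n)%N) (hp : (0 < p)%N) (hq : (0 < q)%N)
  (hV : #|V| = ((p + q) * n)%N)
  (e_sym : symmetric e) (e_irr : irreflexive e)
  (no_iso : forall v : V, exists u : V, e v u)
  (x t : V -> R) (f : V -> {set V} -> R) (hf0 : forall v, f v set0 = 0)
  (w : 'I_n * 'I_(p + q) -> V) (w_bij : bijective w)
  (w_indep : forall (i : 'I_n) (j j' : 'I_(p + q)), ~~ e (w (i, j)) (w (i, j'))) :
  EB n (p + q) p (fun B => xiT e n p q f (treatT n (p + q) w B)) = 0 /\
  EB n (p + q) p (fun B => tNeyman e n p q x t f (treatT n (p + q) w B)) = tbar n (p + q) t.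
Proof.
case: w_bij => winv wK winvK.
have memT : forall B k l, (w (k, l) \in treatT n (p + q) w B) = (l \in B k).
  move=> B k l; rewrite inE; apply/existsP/idP.
    case=> k' /existsP [l' /andP [hl /eqP hw]].
    by move: (congr1 winv hw); rewrite !wK => -[<- <-].
  by move=> hl; exists k; apply/existsP; exists l; rewrite hl eqxx.
have sigW : forall B v, sigmaT R p q (treatT n (p + q) w B) v =
    sg R p q ((winv v).2 \in B (winv v).1).
  move=> B v; rewrite /sigmaT /sg -{1}(winvK v); case: (winv v) => k l.
  by rewrite memT.
have A : forall v (g : {ffun 'I_n -> {set 'I_(p + q)}} -> R),
    (forall B B' : {ffun 'I_n -> {set 'I_(p + q)}},
       (forall k, k != (winv v).1 -> B k = B' k) -> g B = g B') ->
    \sum_(B in Bchoices n (p + q) p) sigmaT R p q (treatT n (p + q) w B) v * g B = 0.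
  move=> v g hg; rewrite (eq_bigr (fun B : {ffun 'I_n -> {set 'I_(p + q)}} => sg R p q ((winv v).2 \in B (winv v).1) * g B)).
    exact: key.
  by move=> B _; rewrite sigW.
have Af : forall v, \sum_(B in Bchoices n (p + q) p)
    sigmaT R p q (treatT n (p + q) w B) v * f v (treatT n (p + q) w B :&: nbhd e v) = 0.
  move=> v; apply: (A v (fun B => f v (treatT n (p + q) w B :&: nbhd e v))).
  move=> B B' hB; congr (f v _); apply/setP => u.
  rewrite !in_setI -(winvK u); case: (winv u) => k l; rewrite !memT.
  have [->|hk] := eqVneq k (winv v).1; last by rewrite hB.
  have -> : (w ((winv v).1, l) \in nbhd e v) = false.
    rewrite inE -{1}(winvK v); case: (winv v) => i j /=; exact: negbTE (w_indep _ _ _).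
  by rewrite !andbF.
have Ax : forall v, \sum_(B in Bchoices n (p + q) p)
    sigmaT R p q (treatT n (p + q) w B) v = 0.
  move=> v; rewrite -[RHS](A v (fun _ => 1)) //.
  by apply: eq_bigr => B _; rewrite mulr1.
split.
  rewrite /EB /xiT -mulr_sumr exchange_big big1 ?mulr0 ?mul0r //.
have r0 : ((p + q)%:R : R) != 0 by rewrite pnatr_eq0 addn_eq0 negb_and -lt0n hp.
set N := #|Bchoices n (p + q) p|.
have N0 : (N%:R : R) != 0.
  rewrite pnatr_eq0 -lt0n; apply/card_gt0P.
  exists [ffun _ => [set widen_ord (leq_addr q p) j | j : 'I_p]].
  rewrite inE; apply/forallP => k; rewrite ffunE card_imset ?card_ord //.
  by move=> a b /(congr1 val) /= /val_inj.
have Pt : forall v, \sum_(B in Bchoices n (p + q) p)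
    sigmaT R p q (treatT n (p + q) w B) v *
      outcome e x t f (treatT n (p + q) w B) v =
    ((p * q)%:R * t v / (p + q)%:R) *+ N.
  move=> v.
  rewrite (eq_bigr (fun B : {ffun 'I_n -> {set 'I_(p + q)}} =>
     sigmaT R p q (treatT n (p + q) w B) v * x v +
     (sigmaT R p q (treatT n (p + q) w B) v * (q%:R * t v / (p + q)%:R) +
        (p * q)%:R * t v / (p + q)%:R) +
     sigmaT R p q (treatT n (p + q) w B) v * f v (treatT n (p + q) w B :&: nbhd e v))).
    by rewrite !big_split /= -!mulr_suml Ax Af !mul0r add0r addr0 add0r sumr_const !mulrnAl.
  move=> B _; rewrite /outcome !mulrDr; congr (_ + _ + _).
  rewrite /sigmaT; case: ifP => _; rewrite !natrM natrD; field;
    by rewrite -natrD.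
rewrite /EB /tNeyman -mulr_sumr exchange_big /=.
rewrite (eq_bigr (fun v => ((p * q)%:R * t v / (p + q)%:R) *+ N)); last first.
  by move=> v _; exact: Pt.
rewrite sumrMnl -[(_ *+ N)]mulr_natr /tbar.
have -> : \sum_i (p * q)%:R * t i / (p + q)%:R = (p * q)%:R / (p + q)%:R * \sum_i t i.
  by rewrite mulr_sumr; apply: eq_bigr => i _; rewrite mulrAC.
have n0 : (n%:R : R) != 0 by rewrite pnatr_eq0 -lt0n.
have p0 : (p%:R : R) != 0 by rewrite pnatr_eq0 -lt0n.
have q0 : (q%:R : R) != 0 by rewrite pnatr_eq0 -lt0n.
rewrite !natrM; field.
by rewrite -natrD n0 p0 q0 N0 r0.
Qed.
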